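(* Let $c$ be any real number. For each finite-dimensional system $A$ and $\rho\in\mathfrak{S}(A)$ define $\Theta_\rho:\mathfrak{B}(A)\to\mathfrak{B}(A)$ by $\Theta_\rho(M)=\tfrac12\{\rho,M\}+ic[\rho,M]$, and define $\mathcal{E}_{B|A}\star\rho_A:=(\Theta_\rho\otimes\mathrm{id}_B)(\mathscr{D}[\mathcal{E}_{B|A}])$ for channels $\mathcal{E}_{B|A}$ and states $\rho_A$ (with action on subsystems defined by $\mathcal{E}\star\rho_{AE}:=((\mathcal{E}\star\cdot)\otimes\mathrm{id}_E)(\rho_{AE})$). Then $\star$ is a state over time function satisfying axioms (H), (E), (P), (CC), (J) and (QC).
   Context: All systems are finite-dimensional Hilbert spaces; a system may also be a subspace of a larger Hilbert space. $\mathfrak{B}(A)$: linear operators; $\mathfrak{S}(A)$: density operators; $\mathfrak{C}(A,B)$: quantum channels (CPTP maps $\mathfrak{B}(A)\to\mathfrak{B}(B)$). $|A|=\dim A$, $\mathbb{1}_A$ identity (also the projector onto $A$ when $A$ is a subspace), $\pi_A=\mathbb{1}_A/|A|$, $A'$ a copy of $A$, $F_{AA'}$ swap, $\mathrm{Ad}_X(Y)=XYX^\dagger$, $[X,Y]=XY-YX$, $\{X,Y\}=XY+YX$. $\mathcal{E}_{B|A'}$ is $\mathcal{E}_{B|A}$ acting on $A'$. Jamiołkowski state: $\mathscr{D}[\mathcal{E}]=(\mathrm{id}_A\otimes\mathcal{E}_{B|A'})(F_{AA'})$. A state over time function assigns to all systems $A,B$ a map $\star:\mathfrak{C}(A,B)\times\mathfrak{S}(A)\to\mathfrak{B}(A\otimes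 B)$ with $\mathrm{Tr}_A[\mathcal{E}\star\rho]=\mathcal{E}(\rho)$, $\mathrm{Tr}_B[\mathcal{E}\star\rho]=\rho$, extended homogeneously by $(\lambda\mathcal{E})\star\rho=\mathcal{E}\star(\lambda\rho)=\lambda(\mathcal{E}\star\rho)$ (so $\mathcal{E}\star\mathbb{1}_A=|A|\,\mathcal{E}\star\pi_A$). A quantum state over spacetime on $A\otimes E$ is a density operator or an operator of the form $\mathcal{F}\star\sigma$. (H): $\mathcal{E}\star\rho$ is Hermitian for all channels and states. (E): for all $A,B,E$, every quantum state over spacetime $\rho_{AE}$ and channel $\mathcal{E}_{B|A}$, $\mathcal{E}_{B|A}\star\rho_{AE}$ on $A\otimes B\otimes E$ is defined with $\mathcal{I}_E[\mathcal{E}\star\rho_{AE}]=\mathcal{E}\star\mathcal{I}_E(\rho_{AE})$ for every completely positive trace-non-increasing $\mathcal{I}_E$ on $E$, and $\mathrm{Tr}_A[\mathcal{E}\star\rho_{AE}]=(\mathcal{E}\otimes\mathrm{id}_E)(\rho_{AE})$. (P): $\mathrm{Tr}_B[\mathcal{F}_{C|B}\star(\mathcal{E}_{B|A}\star\rho_A)]=(\mathcal{F}\circ\mathcal{E})_{C|A}\star\rho_A$ for all channels $\mathcal{E}_{B|A},\mathcal{F}_{C|B}$ and states $\rho_A$, with $\mathcal{F}_{C|B}\star(\cdot)$ acting on the $B$-part (spectator $A$). (CC): for every orthogonal decomposition $A=\bigoplus_iA_i$, every channel $\mathcal{E}_{B|A}$ with $\mathcal{E}\circ(\sum_i\mathrm{Ad}_{\mathbb{1}_{A_i}})=\mathcal{E}$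 and every probability distribution $\{\lambda_i\}$: $\mathcal{E}\star(\sum_i\lambda_i\pi_{A_i})=\sum_i\lambda_i\,\mathcal{E}_{B|A_i}\star\pi_{A_i}$, with $\mathcal{E}_{B|A_i}=\mathcal{E}\circ\mathrm{Ad}_{\mathbb{1}_{A_i}}$ viewed as a channel from the subspace system $A_i$ to $B$. (J): for every system $A$, including subspaces of larger systems, and every channel: $\mathcal{E}_{B|A}\star\pi_A=|A|^{-1}\mathscr{D}[\mathcal{E}]$. (QC): for every $\rho\in\mathfrak{S}(A)$ there is a linear map $\Theta_\rho$ on $\mathfrak{B}(A)$ with $\mathcal{E}_{B|A}\star\rho_A=(\Theta_\rho\otimes\mathrm{id}_B)(\mathcal{E}_{B|A}\star\mathbb{1}_A)$ for all $\mathcal{E}\in\mathfrak{C}(A,B)$, and $\Theta_\rho(M)=\rho M$ whenever $[\rho,M]=0$. *)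

(* Defs.v *)
From HB Require Import structures.
From mathcomp Require Import all_boot all_order all_algebra.
From mathcomp Require Import complex mxtens.
From mathcomp Require Import reals.

Set Implicit Arguments.
Unset Strict Implicit.
Unset Printing Implicit Defensive.
Import Order.TTheory GRing.Theory Num.Theory.
Local Open Scope ring_scope.

(* Systems are finite-dimensional Hilbert spaces C^n; operators on A are
   'M[C]_n; operators on A (x) B are 'M[C]_(n*m), the factor pairing being
   mathcomp's Kronecker index  mxtens_index (a, b)  (so  A *t B  is the
   tensor product of operators).  Linear maps B(A) -> B(B) are plain
   functions 'M_n -> 'M_m (linearity is an explicit hypothesis). *)

Section QDefs.
Variable C : numClosedFieldType.

Definition idx {n m : nat} (a : 'I_n) (b : 'I_m) : 'I_(n * m) :=
  mxtens_index (a, b).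
Definition fst_ {n m : nat} (i : 'I_(n * m)) : 'I_n := (mxtens_unindex i).1.
Definition snd_ {n m : nat} (i : 'I_(n * m)) : 'I_m := (mxtens_unindex i).2.

Definition adjmx {n m : nat} (M : 'M[C]_(n, m)) : 'M[C]_(m, n) :=
  \matrix_(i, j) (M j i)^*.

Definition hermitian {n : nat} (M : 'M[C]_n) : Prop := adjmx M = M.

Definition psd {n : nat} (M : 'M[C]_n) : Prop :=
  forall v : 'cV[C]_n, 0 <= (adjmx v *m M *m v) 0 0.

Definition density {n : nat} (rho : 'M[C]_n) : Prop :=
  psd rho /\ \tr rho = 1.

Definition pimx (n : nat) : 'M[C]_n := (n%:R)^-1 *: 1%:M.

Definition blkL {n k : nat} (X : 'M[C]_(n * k)) (e e' : 'I_k) : 'M[C]_n :=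
  \matrix_(a, a') X (idx a e) (idx a' e').
Definition blkR {k n : nat} (X : 'M[C]_(k * n)) (e e' : 'I_k) : 'M[C]_n :=
  \matrix_(a, a') X (idx e a) (idx e' a').

(* Phi (x) id_E  on  B(A (x) E) *)
Definition mapL {n p k : nat} (Phi : 'M[C]_n -> 'M[C]_p) (X : 'M[C]_(n * k))
  : 'M[C]_(p * k) :=
  \matrix_(i, j) Phi (blkL X (snd_ i) (snd_ j)) (fst_ i) (fst_ j).

(* id_K (x) Phi  on  B(K (x) A) *)
Definition mapR {k n p : nat} (Phi : 'M[C]_n -> 'M[C]_p) (X : 'M[C]_(k * n))
  : 'M[C]_(k * p) :=
  \matrix_(i, j) Phi (blkR X (fst_ i) (fst_ j)) (snd_ i) (snd_ j).

Definition ptrA {n m : nat} (X : 'M[C]_(n * m)) : 'M[C]_m :=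
  \sum_(a < n) blkR X a a.
Definition ptrB {n m : nat} (X : 'M[C]_(n * m)) : 'M[C]_n :=
  \sum_(b < m) blkL X b b.

(* Tr_A on (A (x) B) (x) E *)
Definition ptrA3 {n m k : nat} (X : 'M[C]_((n * m) * k)) : 'M[C]_(m * k) :=
  \matrix_(i, j) \sum_(a < n)
     X (idx (idx a (fst_ i)) (snd_ i)) (idx (idx a (fst_ j)) (snd_ j)).

(* Tr_B on A (x) (B (x) C) *)
Definition ptrB3 {n m p : nat} (X : 'M[C]_(n * (m * p))) : 'M[C]_(n * p) :=
  \matrix_(i, j) \sum_(b < m)
     X (idx (fst_ i) (idx b (snd_ i))) (idx (fst_ j) (idx b (snd_ j))).

Definition swapmx (n : nat) : 'M[C]_(n * n) :=
  \sum_(i < n) \sum_(j < n) (delta_mx i j *t delta_mx j i).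

(* Jamiolkowski operator D[E] = (id_A (x) E_{B|A'})(F_{AA'}) *)
Definition jam {n m : nat} (E : 'M[C]_n -> 'M[C]_m) : 'M[C]_(n * m) :=
  mapR E (swapmx n).

Definition linmap {n m : nat} (f : 'M[C]_n -> 'M[C]_m) : Prop :=
  forall (a : C) (x y : 'M[C]_n), f (a *: x + y) = a *: f x + f y.

Definition CPmap {n m : nat} (f : 'M[C]_n -> 'M[C]_m) : Prop :=
  forall (k : nat) (X : 'M[C]_(k * n)), psd X -> psd (mapR f X).

Definition TPmap {n m : nat} (f : 'M[C]_n -> 'M[C]_m) : Prop :=
  forall X : 'M[C]_n, \tr (f X) = \tr X.

Definition TNImap {n m : nat} (f : 'M[C]_n -> 'M[C]_m) : Prop :=
  forall X : 'M[C]_n, psd X -> \tr (f X) <= \tr X.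

Definition channel {n m : nat} (f : 'M[C]_n -> 'M[C]_m) : Prop :=
  [/\ linmap f, CPmap f & TPmap f].

Definition starT := forall n m : nat,
  ('M[C]_n -> 'M[C]_m) -> 'M[C]_n -> 'M[C]_(n * m).

Definition state_over_time (star : starT) : Prop :=
  (forall n m (E : 'M[C]_n -> 'M[C]_m) (rho : 'M[C]_n),
     channel E -> density rho ->
     ptrA (star n m E rho) = E rho /\ ptrB (star n m E rho) = rho)
  /\
  (forall n m (E : 'M[C]_n -> 'M[C]_m) (rho : 'M[C]_n) (l : C),
     channel E -> density rho ->
     star n m (fun X => l *: E X) rho = l *: star n m E rho
     /\ star n m E (l *: rho) = l *: star n m E rho).

Definition spacetime_state (star : starT) {n k : nat} (X : 'M[C]_(n * k))
  : Prop :=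
  density X \/
  exists (F : 'M[C]_n -> 'M[C]_k) (sigma : 'M[C]_n),
    [/\ channel F, density sigma & X = star n k F sigma].

Definition axiom_H (star : starT) : Prop :=
  forall n m (E : 'M[C]_n -> 'M[C]_m) (rho : 'M[C]_n),
    channel E -> density rho -> hermitian (star n m E rho).

Definition axiom_E (star : starT) : Prop :=
  forall n m k (E : 'M[C]_n -> 'M[C]_m) (rhoAE : 'M[C]_(n * k)),
    channel E -> spacetime_state star rhoAE ->
    (forall I : 'M[C]_k -> 'M[C]_k, linmap I -> CPmap I -> TNImap I ->
       mapR (k := n * m) I (mapL (star n m E) rhoAE)
       = mapL (star n m E) (mapR I rhoAE))
    /\ ptrA3 (mapL (star n m E) rhoAE) = mapL E rhoAE.

Definition axiom_P (star : starT) : Prop :=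
  forall n m p (E : 'M[C]_n -> 'M[C]_m) (F : 'M[C]_m -> 'M[C]_p)
         (rho : 'M[C]_n),
    channel E -> channel F -> density rho ->
    ptrB3 (mapR (k := n) (star m p F) (star n m E rho))
    = star n p (F \o E) rho.

(* embedding of an operator on the subspace system A_i (x) B into A (x) B,
   the subspace A_i being the range of the isometry V *)
Definition embed {n d m : nat} (V : 'M[C]_(n, d)) (Z : 'M[C]_(d * m))
  : 'M[C]_(n * m) :=
  (V *t (1%:M : 'M[C]_m)) *m Z *m adjmx (V *t (1%:M : 'M[C]_m)).

Definition axiom_CC (star : starT) : Prop :=
  forall n m (r : nat) (d : 'I_r -> nat) (V : forall i : 'I_r, 'M[C]_(n, d i))
         (E : 'M[C]_n -> 'M[C]_m) (lam : 'I_r -> C),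
    (* orthogonal decomposition A = (+)_i A_i, A_i = range (V i) *)
    (forall i, (0 < d i)%N) ->
    (forall i, adjmx (V i) *m V i = 1%:M) ->
    (forall i j, i != j -> adjmx (V i) *m V j = 0) ->
    \sum_(i < r) V i *m adjmx (V i) = 1%:M ->
    channel E ->
    (forall X : 'M[C]_n,
       E (\sum_(i < r) (V i *m adjmx (V i)) *m X *m (V i *m adjmx (V i)))
       = E X) ->
    (forall i, 0 <= lam i) -> \sum_(i < r) lam i = 1 ->
    star n m E (\sum_(i < r) lam i *: ((d i)%:R^-1 *: (V i *m adjmx (V i))))
    = \sum_(i < r) lam i *:
        embed (V i)
          (star (d i) m (fun Y => E (V i *m Y *m adjmx (V i))) (pimx (d i))).

Definition axiom_J (star : starT) : Prop :=
  forall n m (E : 'M[C]_n -> 'M[C]_m),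
    channel E -> star n m E (pimx n) = (n%:R)^-1 *: jam E.

Definition axiom_QC (star : starT) : Prop :=
  forall n (rho : 'M[C]_n), density rho ->
    exists Theta : 'M[C]_n -> 'M[C]_n,
      [/\ linmap Theta,
          (forall m (E : 'M[C]_n -> 'M[C]_m), channel E ->
             star n m E rho = mapL Theta (star n m E 1%:M))
        & (forall M : 'M[C]_n, rho *m M = M *m rho -> Theta M = rho *m M)].

(* Theta_rho(M) = 1/2 {rho, M} + i c [rho, M]; the imaginary unit iu is
   passed explicitly (the statement instantiates it with Complex 0 1) *)
Definition ThetaC (iu c : C) {n : nat} (rho : 'M[C]_n) (M : 'M[C]_n) : 'M[C]_n :=
  (2%:R)^-1 *: (rho *m M + M *m rho) + (iu * c) *: (rho *m M - M *m rho).

Definition starC (iu c : C) : starT :=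
  fun n m E rho => mapL (ThetaC iu c rho) (jam E).

End QDefs.

(* Main.v *)
Set Warnings "-notation-overridden,-ambiguous-paths,-parsing,-coercions".
Require Import Defs.
From HB Require Import structures.
From mathcomp Require Import all_boot all_order all_algebra.
From mathcomp Require Import complex mxtens.
From mathcomp Require Import reals.
From mathcomp Require Import ring lra.
Set Implicit Arguments.
Unset Strict Implicit.
Unset Printing Implicit Defensive.
Local Open Scope ring_scope.
Import GRing.Theory Num.Theory.

Section Gen.
Variable C : numClosedFieldType.
Local Notation M n := ('M[C]_n).

Lemma fst_idx n m (a : 'I_n) (b : 'I_m) : fst_ (idx a b) = a.
Proof. by rewrite /fst_ /idx mxtens_indexK. Qed.
Lemma snd_idx n m (a : 'I_n) (b : 'I_m) : snd_ (idx a b) = b.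
Proof. by rewrite /snd_ /idx mxtens_indexK. Qed.

Lemma idx_eq n m (a a' : 'I_n) (b b' : 'I_m) :
  (idx a b == idx a' b') = (a == a') && (b == b').
Proof.
by rewrite /idx (inj_eq (can_inj (@mxtens_indexK n m))) xpair_eqE.
Qed.

Lemma mxtensP n m p q (X Y : 'M[C]_(n * m, p * q)) :
  (forall a b a' b', X (idx a b) (idx a' b') = Y (idx a b) (idx a' b')) ->
  X = Y.
Proof.
move=> h; apply/matrixP => i j.
case: (mxtens_indexP i) => a b; case: (mxtens_indexP j) => a' b'.
exact: h.
Qed.

Lemma tensE n m p q (A : 'M[C]_(n, p)) (B : 'M[C]_(m, q)) a b a' b' :
  (A *t B) (idx a b) (idx a' b') = A a a' * B b b'.
Proof. exact: tensmxE. Qed.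

Lemma blkLE n k (X : M (n * k)) e e' a a' :
  blkL X e e' a a' = X (idx a e) (idx a' e').
Proof. by rewrite mxE. Qed.
Lemma blkRE k n (X : M (k * n)) e e' a a' :
  blkR X e e' a a' = X (idx e a) (idx e' a').
Proof. by rewrite mxE. Qed.

Lemma mapLE n p k (Phi : M n -> M p) (X : M (n * k)) a b a' b' :
  mapL Phi X (idx a b) (idx a' b') = Phi (blkL X b b') a a'.
Proof. by rewrite mxE !fst_idx !snd_idx. Qed.
Lemma mapRE k n p (Phi : M n -> M p) (X : M (k * n)) a b a' b' :
  mapR Phi X (idx a b) (idx a' b') = Phi (blkR X a a') b b'.
Proof. by rewrite mxE !fst_idx !snd_idx. Qed.

Section Lin.
Variables (n p : nat) (f : M n -> M p) (Hf : linmap f).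
Lemma lin0 : f 0 = 0.
Proof.
have h := Hf 1 0 0; rewrite !scale1r addr0 in h.
by apply: (addIr (f 0)); rewrite add0r -h.
Qed.
Lemma linD x y : f (x + y) = f x + f y.
Proof. by have := Hf 1 x y; rewrite !scale1r. Qed.
Lemma linZ a x : f (a *: x) = a *: f x.
Proof. by have := Hf a x 0; rewrite addr0 lin0 addr0. Qed.
Lemma linN x : f (- x) = - f x.
Proof. by rewrite -scaleN1r linZ scaleN1r. Qed.
Lemma linB x y : f (x - y) = f x - f y.
Proof. by rewrite linD linN. Qed.
Lemma lin_sum I r (P : pred I) F :
  f (\sum_(i <- r | P i) F i) = \sum_(i <- r | P i) f (F i).
Proof. exact: (big_morph f linD lin0). Qed.
Lemma lin_expand x :
  f x = \sum_i \sum_j x i j *: f (delta_mx i j).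
Proof.
rewrite {1}(matrix_sum_delta x) lin_sum; apply: eq_bigr => i _.
by rewrite lin_sum; apply: eq_bigr => j _; rewrite linZ.
Qed.
End Lin.

Lemma lin_ext n p (f g : M n -> M p) : linmap f -> linmap g ->
  (forall i j, f (delta_mx i j) = g (delta_mx i j)) -> forall x, f x = g x.
Proof.
move=> hf hg h x; rewrite (lin_expand hf) (lin_expand hg).
by apply: eq_bigr => i _; apply: eq_bigr => j _; rewrite h.
Qed.

Lemma linmap_id n : linmap (fun X : M n => X).
Proof. by []. Qed.

Lemma linmap_comp n p q (f : M n -> M p) (g : M p -> M q) :
  linmap f -> linmap g -> linmap (fun X => g (f X)).
Proof. by move=> hf hg a x y; rewrite hf hg. Qed.

Lemma tensmxDl n m p q (A A' : 'M[C]_(n, p)) (B : 'M[C]_(m, q)) :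
  (A + A') *t B = A *t B + A' *t B.
Proof. by apply/matrixP => i j; rewrite !mxE mulrDl. Qed.
Lemma tensmxDr n m p q (A : 'M[C]_(n, p)) (B B' : 'M[C]_(m, q)) :
  A *t (B + B') = A *t B + A *t B'.
Proof. by apply/matrixP => i j; rewrite !mxE mulrDr. Qed.
Lemma tensmxZl n m p q a (A : 'M[C]_(n, p)) (B : 'M[C]_(m, q)) :
  (a *: A) *t B = a *: (A *t B).
Proof. by apply/matrixP => i j; rewrite !mxE mulrA. Qed.
Lemma tensmxZr n m p q a (A : 'M[C]_(n, p)) (B : 'M[C]_(m, q)) :
  A *t (a *: B) = a *: (A *t B).
Proof. by apply/matrixP => i j; rewrite !mxE mulrCA. Qed.
Lemma tensmx_suml n m p q I r (P : pred I) (F : I -> 'M[C]_(n, p))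
   (B : 'M[C]_(m, q)) :
  (\sum_(i <- r | P i) F i) *t B = \sum_(i <- r | P i) (F i *t B).
Proof.
apply: (big_morph (fun A => A *t B)); first by move=> x y; rewrite tensmxDl.
exact: tens0mx.
Qed.
Lemma tensmx_sumr n m p q I r (P : pred I) (A : 'M[C]_(n, p))
   (F : I -> 'M[C]_(m, q)) :
  A *t (\sum_(i <- r | P i) F i) = \sum_(i <- r | P i) (A *t F i).
Proof.
apply: (big_morph (fun B => A *t B)); first by move=> x y; rewrite tensmxDr.
exact: tensmx0.
Qed.

Lemma delta_tens n m (a a' : 'I_n) (e e' : 'I_m) :
  delta_mx (idx a e) (idx a' e') = (delta_mx a a' *t delta_mx e e' : M (n * m)).
Proof.
apply: mxtensP => p q p' q'; rewrite tensE !mxE !idx_eq.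
by case: (p == a); case: (q == e); case: (p' == a'); case: (q' == e');
  rewrite /= ?mulr0 ?mul0r ?mulr1.
Qed.

End Gen.

Section Gen2.
Variable C : numClosedFieldType.
Local Notation M n := ('M[C]_n).

Lemma blkL_lin n k (a : C) (X Y : M (n * k)) e e' :
  blkL (a *: X + Y) e e' = a *: blkL X e e' + blkL Y e e'.
Proof. by apply/matrixP => i j; rewrite !mxE. Qed.
Lemma blkR_lin k n (a : C) (X Y : M (k * n)) e e' :
  blkR (a *: X + Y) e e' = a *: blkR X e e' + blkR Y e e'.
Proof. by apply/matrixP => i j; rewrite !mxE. Qed.

Lemma mapL_lin n p k (Phi : M n -> M p) : linmap Phi ->
  linmap (mapL (k := k) Phi).
Proof. by move=> hP a X Y; apply/matrixP => i j; rewrite !mxE blkL_lin hP !mxE. Qed.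
Lemma mapR_lin k n p (Phi : M n -> M p) : linmap Phi ->
  linmap (mapR (k := k) Phi).
Proof. by move=> hP a X Y; apply/matrixP => i j; rewrite !mxE blkR_lin hP !mxE. Qed.

Lemma mapL_tens n p k (Phi : M n -> M p) (A : M n) (B : M k) :
  linmap Phi -> mapL Phi (A *t B) = Phi A *t B.
Proof.
move=> hP; apply: mxtensP => a b a' b'; rewrite mapLE tensE.
have -> : blkL (A *t B) b b' = B b b' *: A.
  by apply/matrixP => i j; rewrite blkLE tensE mxE mulrC.
by rewrite (linZ hP) mxE mulrC.
Qed.
Lemma mapR_tens k n p (Phi : M n -> M p) (A : M k) (B : M n) :
  linmap Phi -> mapR Phi (A *t B) = A *t Phi B.
Proof.
move=> hP; apply: mxtensP => a b a' b'; rewrite mapRE tensE.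
have -> : blkR (A *t B) a a' = A a a' *: B.
  by apply/matrixP => i j; rewrite blkRE tensE mxE.
by rewrite (linZ hP) mxE.
Qed.

Lemma ptrA_lin n m : linmap (@ptrA C n m).
Proof.
move=> a X Y; rewrite /ptrA scaler_sumr -big_split /=.
by apply: eq_bigr => i _; rewrite blkR_lin.
Qed.
Lemma ptrB_lin n m : linmap (@ptrB C n m).
Proof.
move=> a X Y; rewrite /ptrB scaler_sumr -big_split /=.
by apply: eq_bigr => i _; rewrite blkL_lin.
Qed.

Lemma ptrA_tens n m (A : M n) (B : M m) : ptrA (A *t B) = \tr A *: B.
Proof.
apply/matrixP => b b'; rewrite /ptrA summxE mxE /mxtrace mulr_suml.
by apply: eq_bigr => a _; rewrite blkRE tensE.
Qed.
Lemma ptrB_tens n m (A : M n) (B : M m) : ptrB (A *t B) = \tr B *: A.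
Proof.
apply/matrixP => a a'; rewrite /ptrB summxE mxE /mxtrace mulr_suml.
by apply: eq_bigr => b _; rewrite blkLE tensE mulrC.
Qed.

Lemma ptrA3_lin n m k : linmap (@ptrA3 C n m k).
Proof.
move=> a X Y; apply/matrixP => i j; rewrite !mxE mulr_sumr -big_split /=.
by apply: eq_bigr => x _; rewrite !mxE.
Qed.
Lemma ptrB3_lin n m k : linmap (@ptrB3 C n m k).
Proof.
move=> a X Y; apply/matrixP => i j; rewrite !mxE mulr_sumr -big_split /=.
by apply: eq_bigr => x _; rewrite !mxE.
Qed.

Lemma ptrA3_tens n m k (Y : M (n * m)) (B : M k) :
  ptrA3 (Y *t B) = ptrA Y *t B.
Proof.
apply: mxtensP => b e b' e'; rewrite mxE tensE !fst_idx !snd_idx.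
rewrite /ptrA summxE mulr_suml; apply: eq_bigr => a _.
by rewrite tensE blkRE.
Qed.
Lemma ptrB3_tens n m k (A : M n) (Y : M (m * k)) :
  ptrB3 (A *t Y) = A *t ptrA Y.
Proof.
apply: mxtensP => a c a' c'; rewrite mxE tensE !fst_idx !snd_idx.
rewrite /ptrA summxE mulr_sumr; apply: eq_bigr => b _.
by rewrite tensE blkRE.
Qed.

Lemma jamE n m (E : M n -> M m) : linmap E ->
  jam E = \sum_x \sum_y (delta_mx x y *t E (delta_mx y x)).
Proof.
move=> hE; rewrite /jam /swapmx (lin_sum (mapR_lin hE)).
apply: eq_bigr => x _; rewrite (lin_sum (mapR_lin hE)).
by apply: eq_bigr => y _; rewrite mapR_tens.
Qed.

Lemma mul_delta_entry n d p (A : 'M[C]_(n, d)) (B : 'M[C]_(d, p)) c c' x y :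
  (A *m delta_mx c c' *m B) x y = A x c * B c' y.
Proof.
rewrite -(mul_delta_mx (0 : 'I_1)) mulmxA -(mulmxA _ (delta_mx 0 c')).
rewrite -colE -rowE mxE big_ord1 !mxE //.
Qed.

Lemma tr_mul_delta n (A : M n) x y : \tr (A *m delta_mx x y) = A y x.
Proof.
rewrite -[A *m _]mulmx1 /mxtrace.
under eq_bigr do rewrite mul_delta_entry mxE.
rewrite (bigD1 y) //= eqxx mulr1n mulr1 big1 ?addr0 // => i /negbTE.
by rewrite eq_sym => ->; rewrite mulr0n mulr0.
Qed.

Lemma tr_delta n (x y : 'I_n) : \tr (delta_mx x y : M n) = (y == x)%:R.
Proof. by rewrite -[delta_mx _ _]mul1mx tr_mul_delta mxE. Qed.

End Gen2.

Section Star.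
Variable C : numClosedFieldType.
Local Notation M n := ('M[C]_n).
Variables iu c : C.
Local Notation Th := (ThetaC iu c).
Local Notation star := (starC iu c).

Lemma two_neq0 : (2%:R : C) != 0. Proof. by rewrite pnatr_eq0. Qed.

Lemma Theta_linM n (rho : M n) a x y :
  Th rho (a *: x + y) = a *: Th rho x + Th rho y.
Proof.
rewrite /ThetaC mulmxDr mulmxDl -!scalemxAr -!scalemxAl.
move: (rho *m x) (rho *m y) (x *m rho) (y *m rho) => u1 u2 w1 w2.
by apply/matrixP => i j; rewrite !mxE; ring.
Qed.
Lemma Theta_linR n (X : M n) a r r' :
  Th (a *: r + r') X = a *: Th r X + Th r' X.
Proof.
rewrite /ThetaC mulmxDr mulmxDl -!scalemxAr -!scalemxAl.
move: (r *m X) (r' *m X) (X *m r) (X *m r') => u1 u2 w1 w2.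
by apply/matrixP => i j; rewrite !mxE; ring.
Qed.
Lemma Theta_lin n (rho : M n) : linmap (Th rho).
Proof. by move=> a x y; rewrite Theta_linM. Qed.

Lemma Theta_tr n (rho X : M n) : \tr (Th rho X) = \tr (rho *m X).
Proof.
rewrite /ThetaC linearD /= !linearZ /= linearD linearB /= (mxtrace_mulC X).
by field.
Qed.

Lemma Theta_one n (X : M n) : Th 1%:M X = X.
Proof.
rewrite /ThetaC mul1mx mulmx1 subrr scaler0 addr0.
by apply/matrixP => i j; rewrite !mxE; field.
Qed.

Lemma Theta_scal n (s : C) (X : M n) : Th (s%:M) X = s *: X.
Proof.
rewrite /ThetaC mul_scalar_mx mul_mx_scalar subrr scaler0 addr0.
by apply/matrixP => i j; rewrite !mxE; field.
Qed.

Lemma Theta_pi n (X : M n) : Th (pimx C n) X = n%:R^-1 *: X.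
Proof. by rewrite /pimx scale_scalar_mx mulr1 Theta_scal. Qed.

Lemma Theta_rho1 n (rho : M n) : Th rho 1%:M = rho.
Proof.
rewrite /ThetaC mul1mx mulmx1 subrr scaler0 addr0.
by apply/matrixP => i j; rewrite !mxE; field.
Qed.

Lemma starE n m (E : M n -> M m) rho : linmap E ->
  star E rho = \sum_x \sum_y (Th rho (delta_mx x y) *t E (delta_mx y x)).
Proof.
move=> hE; rewrite /starC (jamE hE) (lin_sum (mapL_lin (Theta_lin rho))).
apply: eq_bigr => x _; rewrite (lin_sum (mapL_lin (Theta_lin rho))).
by apply: eq_bigr => y _; rewrite mapL_tens //; exact: Theta_lin.
Qed.

Lemma star_lin n m (E : M n -> M m) : linmap E -> linmap (star E).
Proof.
move=> hE a x y; rewrite !(starE _ hE) scaler_sumr -big_split /=.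
apply: eq_bigr => i _; rewrite scaler_sumr -big_split /=.
by apply: eq_bigr => j _; rewrite Theta_linR tensmxDl tensmxZl.
Qed.

Lemma ptrA_star n m (E : M n -> M m) rho : linmap E -> ptrA (star E rho) = E rho.
Proof.
move=> hE; have hs := lin_sum (@ptrA_lin C n m); rewrite (starE _ hE) hs.
rewrite [E rho](lin_expand hE) [RHS]exchange_big.
apply: eq_bigr => x _; rewrite hs.
by apply: eq_bigr => y _; rewrite ptrA_tens Theta_tr tr_mul_delta.
Qed.

Lemma ptrB_star n m (E : M n -> M m) rho : linmap E -> TPmap E ->
  ptrB (star E rho) = rho.
Proof.
move=> hE hT; have hs := lin_sum (@ptrB_lin C n m); rewrite (starE _ hE) hs.
rewrite -{2}(Theta_rho1 rho) (lin_expand (Theta_lin rho)).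
apply: eq_bigr => x _; rewrite hs.
by apply: eq_bigr => y _; rewrite ptrB_tens hT tr_delta mxE eq_sym.
Qed.

End Star.

Section Adj.
Variable C : numClosedFieldType.
Local Notation M n := ('M[C]_n).

Lemma adjmxD n m (A B : 'M[C]_(n, m)) : adjmx (A + B) = adjmx A + adjmx B.
Proof. by apply/matrixP => i j; rewrite !mxE rmorphD. Qed.
Lemma adjmxN n m (A : 'M[C]_(n, m)) : adjmx (- A) = - adjmx A.
Proof. by apply/matrixP => i j; rewrite !mxE rmorphN. Qed.
Lemma adjmxB n m (A B : 'M[C]_(n, m)) : adjmx (A - B) = adjmx A - adjmx B.
Proof. by rewrite adjmxD adjmxN. Qed.
Lemma adjmxZ n m a (A : 'M[C]_(n, m)) : adjmx (a *: A) = a^* *: adjmx A.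
Proof. by apply/matrixP => i j; rewrite !mxE rmorphM. Qed.
Lemma adjmx0 n m : adjmx (0 : 'M[C]_(n, m)) = 0.
Proof. by apply/matrixP => i j; rewrite !mxE rmorph0. Qed.
Lemma adjmx_sum n m I r (P : pred I) (F : I -> 'M[C]_(n, m)) :
  adjmx (\sum_(i <- r | P i) F i) = \sum_(i <- r | P i) adjmx (F i).
Proof. exact: (big_morph _ (@adjmxD n m) (@adjmx0 n m)). Qed.
Lemma adjmxK n m (A : 'M[C]_(n, m)) : adjmx (adjmx A) = A.
Proof. by apply/matrixP => i j; rewrite !mxE conjCK. Qed.
Lemma adjmx_mul n m p (A : 'M[C]_(n, m)) (B : 'M[C]_(m, p)) :
  adjmx (A *m B) = adjmx B *m adjmx A.
Proof.
apply/matrixP => i j; rewrite !mxE rmorph_sum; apply: eq_bigr => k _.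
by rewrite !mxE rmorphM mulrC.
Qed.
Lemma adjmx_tens n m p q (A : 'M[C]_(n, p)) (B : 'M[C]_(m, q)) :
  adjmx (A *t B) = adjmx A *t adjmx B.
Proof. by apply/matrixP => i j; rewrite !mxE rmorphM. Qed.
Lemma adjmx_delta n m (i : 'I_n) (j : 'I_m) :
  adjmx (delta_mx i j : 'M[C]_(n, m)) = delta_mx j i.
Proof. by apply/matrixP => a b; rewrite !mxE rmorph_nat andbC. Qed.
Lemma adjmx1 n : adjmx (1%:M : M n) = 1%:M.
Proof. by apply/matrixP => a b; rewrite !mxE rmorph_nat eq_sym. Qed.

Local Notation e i := (delta_mx i 0 : 'cV[C]__).

Lemma form_delta N (Y : M N) i j : adjmx (e i) *m Y *m e j = (Y i j)%:M.
Proof.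
apply/matrixP => a b; rewrite [a]ord1 [b]ord1 adjmx_delta -rowE -colE.
by rewrite !mxE eqxx mulr1n.
Qed.

Lemma form_add N (Y : M N) i j z :
  (adjmx (e i + z *: e j) *m Y *m (e i + z *: e j)) 0 0 =
  Y i i + z * Y i j + z^* * Y j i + z^* * z * Y j j.
Proof.
rewrite adjmxD adjmxZ !mulmxDl !mulmxDr.
rewrite -?scalemxAl -?scalemxAr -?scalemxAl -?scalemxAr !form_delta.
by rewrite !mxE eqxx !mulr1n; ring.
Qed.

Lemma psd_herm N (Y : M N) : psd Y -> adjmx Y = Y.
Proof.
move=> hY; have re (v : 'cV[C]_N) : ((adjmx v *m Y *m v) 0 0)^* = (adjmx v *m Y *m v) 0 0.
  by apply: conj_Creal; apply: ger0_real; apply: hY.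
have hd i : (Y i i)^* = Y i i.
  by have := re (e i); rewrite form_delta mxE eqxx mulr1n.
apply/matrixP => i j; rewrite mxE.
have h1 := re (e j + 1 *: e i); rewrite form_add in h1.
have h2 := re (e j + 'i *: e i); rewrite form_add in h2.
rewrite !rmorphD !rmorphM /= ?conjCK ?rmorph1 ?conjCi !hd in h1 h2.
move: h1 h2; move: (Y j i) (Y i j) (Y j j) (Y i i) => a b p q h1 h2.
have e1 : a^* + b^* = a + b.
  transitivity ((p + 1 * a^* + 1 * b^* + 1 * 1 * q) - p - q); first by ring.
  by rewrite h1; ring.
have e2 : a^* - b^* = b - a.
  apply: (mulfI (neq0Ci C)).
  transitivity (- (p + - 'i * a^* + 'i * b^* + 'i * - 'i * q) + p + 'i * - 'i * q);
    first by ring.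
  by rewrite h2; ring.
transitivity (2%:R^-1 * ((a^* + b^*) + (a^* - b^*))); first by field.
by rewrite e1 e2; field.
Qed.
End Adj.

Section Adj2.
Variable C : numClosedFieldType.
Local Notation M n := ('M[C]_n).
Local Notation e i := (delta_mx i 0 : 'cV[C]__).

Lemma psd_rank1 N (u : 'cV[C]_N) : psd (u *m adjmx u).
Proof.
move=> w; rewrite mulmxA -mulmxA -(adjmxK w) -adjmx_mul adjmxK.
move: (adjmx w *m u) => x.
by rewrite mxE big_ord1 mxE mul_conjC_ge0.
Qed.

Lemma CP_herm n m (E : M n -> M m) : CPmap E ->
  forall v : 'cV[C]_n, adjmx (E (v *m adjmx v)) = E (v *m adjmx v).
Proof.
move=> hCP v; pose u : 'cV[C]_(1 * n) := \col_i v (snd_ i) 0.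
have hY := psd_herm (hCP 1%N _ (psd_rank1 u)).
have hb : blkR (u *m adjmx u) 0 0 = v *m adjmx v.
  by apply/matrixP => a a'; rewrite blkRE !mxE !big_ord1 !mxE !snd_idx.
apply/matrixP => b b'; rewrite mxE.
have := congr1 (fun Z : 'M[C]_(1 * m) => Z (idx (0 : 'I_1) b) (idx (0 : 'I_1) b')) hY.
by rewrite /= mxE !mapRE hb.
Qed.

Lemma outer_add n (x y : 'I_n) (z : C) :
  (e x + z *: e y) *m adjmx (e x + z *: e y) =
  delta_mx x x + z^* *: delta_mx x y + z *: delta_mx y x
    + (z * z^*) *: delta_mx y y.
Proof.
rewrite adjmxD adjmxZ !adjmx_delta !mulmxDl !mulmxDr.
rewrite -?scalemxAl -?scalemxAr -?scalemxAl -?scalemxAr !mul_delta_mx.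
by apply/matrixP => i j; rewrite !mxE; ring.
Qed.

Lemma CP_herm_delta n m (E : M n -> M m) : linmap E -> CPmap E ->
  forall x y, adjmx (E (delta_mx x y)) = E (delta_mx y x).
Proof.
move=> hE hCP x y.
have hd z : adjmx (E (delta_mx z z)) = E (delta_mx z z).
  by have := CP_herm hCP (e z); rewrite adjmx_delta mul_delta_mx.
have h1 := CP_herm hCP (e x + 1 *: e y).
have h2 := CP_herm hCP (e x + 'i *: e y).
rewrite outer_add !(linD hE) !(linZ hE) !adjmxD !adjmxZ !hd in h1.
rewrite outer_add !(linD hE) !(linZ hE) !adjmxD !adjmxZ !hd in h2.
rewrite ?rmorph1 ?conjCi ?rmorphM ?conjCK ?rmorphN ?conjCi ?opprK ?rmorph1 in h1 h2.
apply/matrixP => i j.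
have := congr1 (fun Z : M m => Z i j) h1; have := congr1 (fun Z : M m => Z i j) h2.
rewrite /= !mxE.
move: (E (delta_mx x y) j i)^* (E (delta_mx y x) j i)^* => al be.
move: (E (delta_mx x y) i j) (E (delta_mx y x) i j) => a b.
move: (E (delta_mx x x) i j) (E (delta_mx y y) i j) => p q.
move=> {}h2 {}h1.
have e1 : al + be = a + b.
  transitivity ((p + 1 * al + 1 * be + 1 * 1 * q) - p - q); first by ring.
  by rewrite h1; ring.
have e2 : al - be = b - a.
  apply: (mulfI (neq0Ci C)); rewrite conjCi in h2.
  transitivity ((p + - - 'i * al + - 'i * be + - 'i * - - 'i * q) - p
     - (- 'i * - - 'i * q)); first by ring.
  by rewrite h2; ring.
transitivity (2%:R^-1 * ((al + be) + (al - be))); first by field.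
by rewrite e1 e2; field.
Qed.

Lemma Theta_adj iu c n (rho X : M n) : adjmx rho = rho ->
  (iu * c)^* = - (iu * c) ->
  adjmx (ThetaC iu c rho X) = ThetaC iu c rho (adjmx X).
Proof.
move=> hr hk; rewrite /ThetaC adjmxD !adjmxZ adjmxD adjmxB !adjmx_mul hr hk.
rewrite fmorphV rmorph_nat.
move: (rho *m adjmx X) (adjmx X *m rho) => u w.
by apply/matrixP => i j; rewrite !mxE; ring.
Qed.

End Adj2.

Section Gamma.
Variable C : numClosedFieldType.
Local Notation M n := ('M[C]_n).

Lemma Gamma n d p q (A : 'M[C]_(n, d)) (B : 'M[C]_(d, n))
  (f : M n -> M p) (g : M d -> M q) : linmap f -> linmap g ->
  \sum_(x < n) \sum_(y < n) (f (delta_mx x y) *t g (B *m delta_mx y x *m A))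
  = \sum_(c < d) \sum_(c' < d) (f (A *m delta_mx c c' *m B) *t g (delta_mx c' c)).
Proof.
move=> hf hg.
transitivity (\sum_(x < n) \sum_(y < n) \sum_(c < d) \sum_(c' < d)
   ((B c y * A x c') *: (f (delta_mx x y) *t g (delta_mx c c')))).
  apply: eq_bigr => x _; apply: eq_bigr => y _.
  rewrite (lin_expand hg (B *m _ *m A)) tensmx_sumr; apply: eq_bigr => c _.
  by rewrite tensmx_sumr; apply: eq_bigr => c' _; rewrite tensmxZr mul_delta_entry.
symmetry.
transitivity (\sum_(c < d) \sum_(c' < d) \sum_(x < n) \sum_(y < n)
   ((A x c * B c' y) *: (f (delta_mx x y) *t g (delta_mx c' c)))).
  apply: eq_bigr => c _; apply: eq_bigr => c' _.
  rewrite (lin_expand hf (A *m _ *m B)) tensmx_suml; apply: eq_bigr => x _.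
  by rewrite tensmx_suml; apply: eq_bigr => y _; rewrite tensmxZl mul_delta_entry.
rewrite exchange_big /=.
under eq_bigr => c' _ do rewrite exchange_big /=.
under eq_bigr => c' _ do under eq_bigr => x _ do rewrite exchange_big /=.
rewrite exchange_big /=.
under eq_bigr => x _ do rewrite exchange_big /=.
apply: eq_bigr => x _; apply: eq_bigr => y _; apply: eq_bigr => u _.
by apply: eq_bigr => v _; rewrite mulrC.
Qed.

End Gamma.

Section StarProps.
Variable C : numClosedFieldType.
Local Notation M n := ('M[C]_n).
Variables iu c : C.
Local Notation Th := (ThetaC iu c).
Local Notation star := (starC iu c).

Lemma Theta_scaleR n (l : C) (rho X : M n) : Th (l *: rho) X = l *: Th rho X.
Proof.
rewrite /ThetaC -!scalemxAl -!scalemxAr.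
move: (rho *m X) (X *m rho) => u w.
by apply/matrixP => i j; rewrite !mxE; ring.
Qed.

Lemma Theta_comm n (rho Y : M n) s :
  rho *m Y = s *: Y -> Y *m rho = s *: Y -> Th rho Y = s *: Y.
Proof.
move=> h1 h2; rewrite /ThetaC h1 h2 subrr scaler0 addr0.
by apply/matrixP => i j; rewrite !mxE; field.
Qed.

Lemma ax_sot : state_over_time star.
Proof.
split.
  move=> n m E rho [hE _ hT] _; split; first exact: ptrA_star.
  exact: ptrB_star.
move=> n m E rho l [hE _ _] _.
have hlE : linmap (fun X => l *: E X).
  by move=> a x y; rewrite hE scalerDr !scalerA mulrC.
split.
  rewrite !starE // scaler_sumr; apply: eq_bigr => x _.
  by rewrite scaler_sumr; apply: eq_bigr => y _; rewrite tensmxZr.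
rewrite !starE // scaler_sumr; apply: eq_bigr => x _.
by rewrite scaler_sumr; apply: eq_bigr => y _; rewrite Theta_scaleR tensmxZl.
Qed.

Lemma ax_H : (iu * c)^* = - (iu * c) -> axiom_H star.
Proof.
move=> hk n m E rho [hE hCP _] [hpsd _].
have hr := psd_herm hpsd.
rewrite /Defs.hermitian (starE iu c _ hE) adjmx_sum.
under eq_bigr => x _ do rewrite adjmx_sum.
rewrite exchange_big /=; apply: eq_bigr => y _; apply: eq_bigr => x _.
by rewrite adjmx_tens Theta_adj // adjmx_delta (CP_herm_delta hE hCP).
Qed.

Lemma ax_E : axiom_E star.
Proof.
move=> n m k E X [hE _ _] _.
have hs : linmap (star E) by exact: star_lin.
split.
  move=> I hI _ _.
  apply: (lin_ext (f := fun X => mapR I (mapL (star E) X))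
                  (g := fun X => mapL (star E) (mapR I X))).
  - exact: linmap_comp (mapL_lin hs) (mapR_lin hI).
  - exact: linmap_comp (mapR_lin hI) (mapL_lin hs).
  move=> i j; case: (mxtens_indexP i) => a e; case: (mxtens_indexP j) => a' e'.
  rewrite (@delta_tens C n k a a' e e') /=.
  by rewrite !mapL_tens // !mapR_tens // mapL_tens.
apply: (lin_ext (f := fun X => ptrA3 (mapL (star E) X)) (g := mapL E)).
- exact: linmap_comp (mapL_lin hs) (@ptrA3_lin C n m k).
- exact: mapL_lin.
move=> i j; case: (mxtens_indexP i) => a e; case: (mxtens_indexP j) => a' e'.
rewrite (@delta_tens C n k a a' e e') /=.
by rewrite !mapL_tens // ptrA3_tens ptrA_star.
Qed.

Lemma ax_P : axiom_P star.
Proof.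
move=> n m p E F rho [hE _ _] [hF _ _] _.
have hEF : linmap (F \o E) by exact: linmap_comp.
have hs1 := lin_sum (mapR_lin (k := n) (star_lin iu c hF)).
have hs2 := lin_sum (@ptrB3_lin C n m p).
rewrite (starE iu c _ hE) (starE iu c _ hEF) hs1 hs2; apply: eq_bigr => x _.
rewrite hs1 hs2; apply: eq_bigr => y _.
by rewrite mapR_tens ?ptrB3_tens ?ptrA_star //; exact: star_lin.
Qed.

Lemma ax_J : axiom_J star.
Proof.
move=> n m E [hE _ _].
rewrite starE // jamE // scaler_sumr; apply: eq_bigr => x _.
by rewrite scaler_sumr; apply: eq_bigr => y _; rewrite Theta_pi tensmxZl.
Qed.

Lemma ax_QC : axiom_QC star.
Proof.
move=> n rho _; exists (Th rho); split.
- exact: Theta_lin.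
- move=> m E _; rewrite /starC; congr mapL.
  by apply: mxtensP => a b a' b'; rewrite mapLE Theta_one blkLE.
- move=> X h; rewrite /ThetaC -h subrr scaler0 addr0.
  move: (rho *m X) => u.
  by apply/matrixP => i j; rewrite !mxE; field.
Qed.

End StarProps.

Section CC.
Variable C : numClosedFieldType.
Local Notation M n := ('M[C]_n).
Variables iu c : C.
Local Notation Th := (ThetaC iu c).
Local Notation star := (starC iu c).

Lemma lin_sandwich n d (V : 'M[C]_(n, d)) (W : 'M[C]_(d, n)) :
  linmap (fun Y : M d => V *m Y *m W).
Proof. by move=> a x y; rewrite mulmxDr mulmxDl -scalemxAr -scalemxAl. Qed.

Lemma embed_tens n d m (V : 'M[C]_(n, d)) (A : M d) (B : M m) :
  embed V (A *t B) = (V *m A *m adjmx V) *t B.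
Proof.
by rewrite /embed tensmx_mul adjmx_tens adjmx1 tensmx_mul mul1mx mulmx1.
Qed.

Lemma embed_sum n d m (V : 'M[C]_(n, d)) I r (P : pred I) (F : I -> M (d * m)) :
  embed V (\sum_(i <- r | P i) F i) = \sum_(i <- r | P i) embed V (F i).
Proof. by rewrite /embed mulmx_sumr mulmx_suml. Qed.

Lemma ax_CC : axiom_CC star.
Proof.
move=> n m r d V E lam hd hVV hVo hsum [hE hCP hT] hpinch _ _.
set P := fun i => V i *m adjmx (V i).
set rho := \sum_(i < r) lam i *: ((d i)%:R^-1 *: P i).
have hPP i j : P i *m P j = if i == j then P i else 0.
  rewrite /P mulmxA -(mulmxA (V i)).
  case: eqP => [-> | /eqP ne]; first by rewrite hVV mulmx1.
  by rewrite hVo // mulmx0 mul0mx.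
have hrP i : rho *m P i = (lam i / (d i)%:R) *: P i.
  rewrite mulmx_suml (bigD1 i) //= big1 ?addr0.
    by rewrite -!scalemxAl hPP eqxx scalerA.
  by move=> j hj; rewrite -!scalemxAl hPP (negbTE hj) !scaler0.
have hPr i : P i *m rho = (lam i / (d i)%:R) *: P i.
  rewrite mulmx_sumr (bigD1 i) //= big1 ?addr0.
    by rewrite -!scalemxAr hPP eqxx scalerA.
  by move=> j hj; rewrite -!scalemxAr hPP eq_sym (negbTE hj) !scaler0.
have hTh i X : Th rho (P i *m X *m P i) = (lam i / (d i)%:R) *: (P i *m X *m P i).
  apply: Theta_comm.
    by rewrite (mulmxA rho) (mulmxA rho (P i)) hrP -!scalemxAl.
  by rewrite -(mulmxA (P i *m X)) hPr -scalemxAr.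
have hEi i : linmap (fun Y => E (V i *m Y *m adjmx (V i))).
  exact: linmap_comp (lin_sandwich _ _) hE.
rewrite (starE iu c _ hE).
transitivity (\sum_(i < r) \sum_(x < n) \sum_(y < n)
   (Th rho (delta_mx x y) *t E (P i *m delta_mx y x *m P i))).
  rewrite [RHS]exchange_big /=; apply: eq_bigr => x _.
  rewrite [RHS]exchange_big /=; apply: eq_bigr => y _.
  by rewrite -hpinch (lin_sum hE) tensmx_sumr.
apply: eq_bigr => i _.
rewrite (Gamma (P i) (P i) (Theta_lin iu c rho) hE).
under eq_bigr => x _ do under eq_bigr => y _ do rewrite hTh tensmxZl.
under eq_bigr => x _ do rewrite -scaler_sumr.
rewrite -scaler_sumr.
have G1 := Gamma (P i) (P i) (linmap_id (n := n)) hE.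
have G2 := Gamma (V i) (adjmx (V i)) (linmap_id (n := n)) (hEi i).
rewrite /= in G1 G2.
transitivity ((lam i / (d i)%:R) *: \sum_(c0 < d i) \sum_(c' < d i)
    ((V i *m delta_mx c0 c' *m adjmx (V i)) *t
      E (V i *m delta_mx c' c0 *m adjmx (V i)))).
  congr (_ *: _); rewrite -G1 -G2.
  apply: eq_bigr => x _; apply: eq_bigr => y _.
  by rewrite /P !mulmxA.
rewrite (starE iu c _ (hEi i)) embed_sum -scalerA; congr (_ *: _).
rewrite scaler_sumr; apply: eq_bigr => x _.
rewrite embed_sum scaler_sumr; apply: eq_bigr => y _.
by rewrite Theta_pi embed_tens -scalemxAr -scalemxAl tensmxZl.
Qed.

End CC.

Lemma conj_ic (R : realType) (c : R) :
  (((0 +i* 1)%C * (c%:C)%C) : R[i])^* = - ((0 +i* 1)%C * (c%:C)%C).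
Proof.
set j : R[i] := (0 +i* 1)%C.
have hcr : ((c%:C)%C : R[i]) \is Num.real by apply/complex_realP; exists c.
have hj2 : j ^+ 2 = -1 by exact: sqr_i.
have hjc2 : j^* ^+ 2 = -1 by rewrite -rmorphXn hj2 rmorphN rmorph1.
rewrite rmorphM /= (conj_Creal hcr) -mulNr; congr (_ * _).
have : (j^* - j) * (j^* + j) = 0 by rewrite -subr_sqr hjc2 hj2 subrr.
move/eqP; rewrite mulf_eq0 => /orP [/eqP h | ]; last by rewrite addr_eq0 => /eqP.
have hr : j \is Num.real by apply/CrealP; apply/eqP; rewrite -subr_eq0 h.
by move: hr; rewrite realEsqr hj2 oppr_ge0 ler10.
Qed.

Unset Implicit Arguments.
Set Strict Implicit.

Theorem proposition9 (R : realType) (c : R) :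
  let star := starC (0 +i* 1)%C (c%:C)%C in
  state_over_time star /\ axiom_H star /\ axiom_E star /\ axiom_P star /\
  axiom_CC star /\ axiom_J star /\ axiom_QC star.
Proof.
move=> star; split; first exact: ax_sot.
split; first exact/ax_H/conj_ic.
split; first exact: ax_E.
split; first exact: ax_P.
split; first exact: ax_CC.
split; first exact: ax_J.
exact: ax_QC.
Qed.
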